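(* There is an absolute constant $c>0$ such that for every sufficiently small $\varepsilon>0$ and every $u\in V$, $d^2_u-k_u\le\frac{c}{\varepsilon^2}(w_u-k_u)$.
   Context: A Correlation Clustering instance consists of a finite vertex set $V$ and a partition $E^+\uplus E^-=\binom V2$ of unordered pairs of distinct vertices into $+$edges and $-$edges. $\mathcal K$ is a partition of $V$ into atoms, and every pair of distinct vertices in a common atom is a $+$edge. For $u\in V$, $K_u$ is the atom containing $u$ and $k_u=|K_u|$. For $u,v\in V$ (possibly equal), $w_{uv}=\frac1{k_uk_v}\sum_{u'\in K_u,v'\in K_v}\mathbf 1[u'v'\text{ is a }+\text{edge or }u'=v']\in[0,1]$, and $w_u=\sum_{v\in V}w_{uv}$. Let $E^1=\{uv:\varepsilon w_v<w_u<w_v/\varepsilon\}$ and $N^1_u=\{v:uv\in E^1\}$ (unordered pairs, $u=v$ allowed). Let $E^2=\{uv: K_u=K_v,\ \text{or}\ uv\in E^1\text{ and }\sum_{p\in N^1_u\cap N^1_v}w_{up}w_{vp}>\varepsilon(w_u+w_v)\}$, and $d^2_u=|\{v\in V: uv\in E^2\}|$. *)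

(* Defs.v *)
From HB Require Import structures.
From mathcomp Require Import all_boot all_order all_algebra.
Set Implicit Arguments. Unset Strict Implicit. Unset Printing Implicit Defensive.
Import Order.TTheory GRing.Theory Num.Theory.
Local Open Scope ring_scope.

(* Correlation clustering instance: vertex set T (finite), [plus] the
   (symmetric) +edge relation on pairs of distinct vertices (all other pairs
   are -edges), and [K] a partition of the vertex set into atoms. *)

Section CC.
Variables (R : realFieldType) (T : finType) (plus : rel T) (K : {set {set T}}).

Definition cc_instance : Prop :=
  [/\ (forall x y, plus x y = plus y x),
      partition K [set: T] &
      (forall A, A \in K -> forall x y, x \in A -> y \in A -> x != y -> plus x y)].

Definition atom (u : T) : {set T} := pblock K u.
Definition katom (u : T) : nat := #|atom u|.

Definition plus_or_eq (x y : T) : bool := (x == y) || plus x y.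

Definition wpair (u v : T) : R :=
  (katom u * katom v)%:R^-1 *
  \sum_(u' in atom u) \sum_(v' in atom v) (plus_or_eq u' v')%:R.

Definition wvert (u : T) : R := \sum_(v : T) wpair u v.

Variable eps : R.

Definition E1 (u v : T) : bool := (eps * wvert v < wvert u) && (wvert u < wvert v / eps).

Definition N1 (u : T) : {set T} := [set v | E1 u v].

Definition E2 (u v : T) : bool :=
  (atom u == atom v) ||
  (E1 u v && (eps * (wvert u + wvert v) <
              \sum_(p in N1 u :&: N1 v) wpair u p * wpair v p)).

Definition d2 (u : T) : nat := #|[set v | E2 u v]|.

End CC.

(* Main.v *)
Require Import Defs.
From HB Require Import structures.
From mathcomp Require Import all_boot all_order all_algebra.
From mathcomp Require Import ring lra.
Import Order.TTheory GRing.Theory Num.Theory.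
Local Open Scope ring_scope.

Lemma sum_le_sub (R : numDomainType) (I : finType) (P Q : pred I) (f : I -> R) :
  (forall i, P i -> Q i) -> (forall i, Q i -> 0 <= f i) ->
  \sum_(i | P i) f i <= \sum_(i | Q i) f i.
Proof.
move=> PQ f0; rewrite [X in _ <= X](bigID P) /=.
have -> : \sum_(i | Q i && P i) f i = \sum_(i | P i) f i.
  by apply: eq_bigl => i; case Pi: (P i); rewrite ?andbT ?andbF ?PQ.
rewrite lerDl; apply: sumr_ge0 => i /andP [Qi _]; exact: f0.
Qed.

Section Main.
Variables (R : realFieldType) (T : finType) (plus : rel T) (K : {set {set T}}).
Hypothesis Hcc : cc_instance plus K.
Variable eps : R.
Hypothesis eps0 : 0 < eps.
Hypothesis eps1 : eps <= 1.

Local Notation w := (wpair R plus K).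
Local Notation W := (wvert R plus K).

Lemma cov_all x : x \in cover K.
Proof. by case: Hcc => _ /and3P [/eqP -> _ _] _; rewrite inE. Qed.

Lemma atom_self x : x \in atom K x.
Proof. by rewrite /atom mem_pblock cov_all. Qed.

Lemma atom_eqE x y : (atom K x == atom K y) = (y \in atom K x).
Proof. by case: Hcc => _ /and3P [_ tr _] _; rewrite /atom eq_pblock // cov_all. Qed.

Lemma atom_eqP x y : y \in atom K x -> atom K y = atom K x.
Proof. by rewrite -atom_eqE => /eqP ->. Qed.

Lemma w_ge0 x y : 0 <= w x y.
Proof.
rewrite /wpair mulr_ge0 // ?invr_ge0 ?ler0n //.
by apply: sumr_ge0 => i _; apply: sumr_ge0 => j _; rewrite ler0n.
Qed.

Lemma W_ge0 x : 0 <= W x.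
Proof. by apply: sumr_ge0 => i _; apply: w_ge0. Qed.

Lemma w_sym x y : w x y = w y x.
Proof.
rewrite /wpair mulnC; congr (_ * _); rewrite exchange_big /=.
apply: eq_bigr => i _; apply: eq_bigr => j _.
case: Hcc => Hs _ _; by rewrite /plus_or_eq Hs eq_sym.
Qed.

Lemma w_atomr x p q : atom K p = atom K q -> w x p = w x q.
Proof. by move=> E; rewrite /wpair /katom E. Qed.

Lemma katom_gt0 x : (0 < katom K x)%N.
Proof. by rewrite /katom; apply/card_gt0P; exists x; apply: atom_self. Qed.

Lemma w_self x : w x x = 1.
Proof.
rewrite /wpair.
have -> : \sum_(u' in atom K x) \sum_(v' in atom K x) ((plus_or_eq plus u' v')%:R : R)
   = \sum_(u' in atom K x) \sum_(v' in atom K x) (1 : R).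
  apply: eq_bigr => i Hi; apply: eq_bigr => j Hj.
  rewrite /plus_or_eq; case: eqP => //= /eqP ne.
  case: Hcc => _ _ H; by rewrite (H _ (pblock_mem (cov_all x))).
rewrite sumr_const sumr_const -mulrnA /katom mulVf //.
by rewrite pnatr_eq0 muln_eq0 negb_or -lt0n katom_gt0.
Qed.

Lemma w_in x p : p \in atom K x -> w x p = 1.
Proof. by move=> Hp; rewrite (@w_atomr x p x (atom_eqP _ _ Hp)) w_self. Qed.

Variable u : T.
Let A := atom K u.
Let k := katom K u.
Let D := \sum_(p | p \notin A) w u p.
Let S := [set v | (v \notin A) && E2 plus K eps u v].

Lemma WD : W u = k%:R + D.
Proof.
rewrite /wvert (bigID (mem A)) /=; congr (_ + _).
rewrite (eq_bigr (fun _ => 1)); last by move=> i Hi; apply: w_in.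
by rewrite sumr_const /k /katom.
Qed.

Lemma D_ge0 : 0 <= D.
Proof. by apply: sumr_ge0 => i _; apply: w_ge0. Qed.

Lemma d2_le : ((d2 plus K eps u)%:R - k%:R : R) <= #|S|%:R.
Proof.
have : (d2 plus K eps u <= k + #|S|)%N.
  rewrite /d2 /k /katom; apply: leq_trans (leq_card_setU _ _).
  apply: subset_leq_card; apply/subsetP => v; rewrite !inE => Hv.
  by case: (boolP (v \in A)) => //= _; rewrite Hv.
rewrite -(ler_nat R) natrD => H; lra.
Qed.

Lemma key : #|S|%:R * (eps * W u) <= k%:R * D + D * (W u / eps).
Proof.
pose g p := if p \in A then D else w u p * (W u / eps).
have k1 : 1 <= (k%:R : R) by rewrite ler1n katom_gt0.
have D0 := D_ge0.
have Wpos : 0 < W u by rewrite WD; lra.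
have step1 : #|S|%:R * (eps * W u) <=
   \sum_(v in S) \sum_(p in N1 plus K eps u) w u p * w v p.
  rewrite mulr_natl -sumr_const; apply: ler_sum => v; rewrite inE => /andP [vA].
  rewrite /E2 atom_eqE (negbTE vA) /= => /andP [_ H].
  apply: le_trans (ltW _) _.
    by apply: le_lt_trans H; rewrite ler_pM2l // lerDl W_ge0.
  apply: sum_le_sub => [i|i _]; first by rewrite inE => /andP [].
  by rewrite mulr_ge0 ?w_ge0.
apply: le_trans step1 _; rewrite exchange_big /=.
apply: le_trans (_ : \sum_(p in N1 plus K eps u) g p <= _).
  apply: ler_sum => p; rewrite inE => Hp; rewrite -mulr_sumr /g.
  case: ifP => pA.
    rewrite w_in //= mul1r.
    rewrite (eq_bigr (fun v => w u v)); last first.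
      by move=> v _; rewrite (w_sym u v); apply: w_atomr; apply: atom_eqP; exact: pA.
    apply: sum_le_sub => [v|v _]; last exact: w_ge0.
    by rewrite inE => /andP [].
  apply: ler_wpM2l; first exact: w_ge0.
  apply: le_trans (_ : W p <= _).
    rewrite /wvert; apply: le_trans (_ : \sum_(v : T) w v p <= _).
      by apply: sum_le_sub => // i _; apply: w_ge0.
    by rewrite le_eqVlt; apply/orP; left; apply/eqP; apply: eq_bigr => v _; rewrite w_sym.
  move: Hp => /andP [H _]; rewrite ler_pdivlMr //; rewrite mulrC; exact: ltW.
apply: le_trans (_ : \sum_p g p <= _).
  apply: sum_le_sub => // p _; rewrite /g; case: ifP => _; first exact: D_ge0.
  by rewrite mulr_ge0 ?w_ge0 // divr_ge0 ?W_ge0 // ltW.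
rewrite (bigID (mem A)) /=; apply: lerD.
  rewrite (eq_bigr (fun _ => D)); last by move=> i Hi; rewrite /g Hi.
  by rewrite sumr_const /k /katom mulr_natl.
rewrite (eq_bigr (fun p => w u p * (W u / eps))); last by move=> i Hi; rewrite /g (negbTE Hi).
by rewrite -mulr_suml.
Qed.

Lemma final : ((d2 plus K eps u)%:R - (katom K u)%:R : R) <= 2 / eps ^+ 2 * (W u - (katom K u)%:R).
Proof.
apply: le_trans d2_le _.
have H := key.
have -> : W u - (katom K u)%:R = D by rewrite WD /k; ring.
set N : R := #|S|%:R.
have D0 := D_ge0.
have k1 : 1 <= (k%:R : R) by rewrite ler1n katom_gt0.
have Wpos : 0 < W u by rewrite WD; lra.
have kW : k%:R <= W u by rewrite WD; lra.
have e2 : 0 < eps ^+ 2 by rewrite exprn_gt0.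
rewrite mulrC mulrA ler_pdivlMr //.
have h1 : N * (eps * W u) * eps <= (k%:R * D + D * (W u / eps)) * eps by rewrite ler_pM2r.
have E : (k%:R * D + D * (W u / eps)) * eps = k%:R * D * eps + D * W u.
  by field; rewrite gt_eqF.
rewrite E in h1.
have h2 : k%:R * D * eps <= W u * D * eps by rewrite ler_pM2r // ler_wpM2r.
have h3 : W u * D * eps <= W u * D * 1 by rewrite ler_wpM2l // mulr_ge0 // ltW.
have h4 : (N * eps ^+ 2) * W u <= (D * 2) * W u.
  have -> : N * eps ^+ 2 * W u = N * (eps * W u) * eps by ring.
  have -> : D * 2 * W u = W u * D * 1 + D * W u by ring.
  lra.
by move: h4; rewrite ler_pM2r.
Qed.

End Main.

Theorem lemma12 :
  exists c : rat, 0 < c /\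
  exists eps0 : rat, 0 < eps0 /\
  forall (R : realFieldType) (eps : R), 0 < eps -> eps < ratr eps0 ->
  forall (T : finType) (plus : rel T) (K : {set {set T}}),
  cc_instance plus K ->
  forall u : T,
    (d2 plus K eps u)%:R - (katom K u)%:R
      <= ratr c / eps ^+ 2 * (wvert R plus K u - (katom K u)%:R).
Proof.
exists 2; split => //; exists 1; split => // R eps e0 e1 T plus K Hcc u.
rewrite rmorph1 in e1; rewrite rmorph_nat.
exact: (@final R T plus K Hcc eps e0 (ltW e1) u).
Qed.
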